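(* Let $k\ge1$, $\lambda>0$, $0<\theta<1$, $F(x,y,\theta)=\frac{1+x+\theta y}{1+x+y}$. Suppose the system $( * )$: $z^-_1=\lambda F(z^-_1,z^+_2,\theta)^k$, $z^+_1=\lambda F(z^+_1,z^-_2,\theta)^k$, $z^-_2=\lambda F(z^-_2,z^+_1,\theta)^k$, $z^+_2=\lambda F(z^+_2,z^-_1,\theta)^k$ has exactly one solution in $(0,\infty)^4$. Then the system $( ** )$: $z_{1,i}=\lambda\prod_{j\in S(i)}F(z_{1,j},z_{2,j},\theta)$, $z_{2,i}=\lambda\prod_{j\in S(i)}F(z_{2,j},z_{1,j},\theta)$ for all $i\in\mathbb{T}^k$, has exactly one positive solution $(z_{1,i},z_{2,i})_{i\in\mathbb{T}^k}$; this solution does not depend on $i$, and its common value is the unique positive solution $(x,y)$ of $x=\lambda F(x,y,\theta)^k$, $y=\lambda F(y,x,\theta)^k$.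
   Context: $\mathbb{T}^k$ is the rooted Cayley tree of order $k$; $S(i)$ is the set of the $k$ direct successors of vertex $i$. *)

(* Defs.v *)
From Stdlib Require Import Reals Lra Lia List.
Import ListNotations.
Open Scope R_scope.

Definition F (x y theta : R) : R := (1 + x + theta * y) / (1 + x + y).

(* Vertices of the rooted Cayley tree T^k: finite words over {0,...,k-1};
   the root is the empty word, and the direct successors of i are i++[j], j<k. *)
Definition is_vertex (k : nat) (v : list nat) : Prop :=
  Forall (fun a => (a < k)%nat) v.

(* product over j in {0,...,k-1} of f j, i.e. over the successors S(i) *)
Definition prod_succ (k : nat) (f : nat -> R) : R :=
  fold_right Rmult 1 (map f (seq 0 k)).

Definition sys4_pos_sol (k : nat) (lam theta z1m z1p z2m z2p : R) : Prop :=
  0 < z1m /\ 0 < z1p /\ 0 < z2m /\ 0 < z2p /\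
  z1m = lam * (F z1m z2p theta) ^ k /\
  z1p = lam * (F z1p z2m theta) ^ k /\
  z2m = lam * (F z2m z1p theta) ^ k /\
  z2p = lam * (F z2p z1m theta) ^ k.

Definition sys2_pos_sol (k : nat) (lam theta x y : R) : Prop :=
  0 < x /\ 0 < y /\
  x = lam * (F x y theta) ^ k /\
  y = lam * (F y x theta) ^ k.

Definition tree_pos_sol (k : nat) (lam theta : R) (z1 z2 : list nat -> R) : Prop :=
  forall i, is_vertex k i ->
    0 < z1 i /\ 0 < z2 i /\
    z1 i = lam * prod_succ k (fun j => F (z1 (i ++ [j])) (z2 (i ++ [j])) theta) /\
    z2 i = lam * prod_succ k (fun j => F (z2 (i ++ [j])) (z1 (i ++ [j])) theta).

(* Main.v *)
Require Import Defs.
From Stdlib Require Import Reals List.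
From Stdlib Require Import Lra Lia Psatz.
From Coquelicot Require Import Coquelicot.
Import ListNotations.
Open Scope R_scope.

Section Aux.
Variables (k : nat) (lam theta : R).
Hypothesis hlam : 0 < lam.
Hypothesis ht0 : 0 < theta.
Hypothesis ht1 : theta < 1.

Lemma F_pos x y : 0 <= x -> 0 <= y -> 0 < F x y theta.
Proof. intros; unfold F. apply Rdiv_lt_0_compat; nra. Qed.

Lemma F_le1 x y : 0 <= x -> 0 <= y -> F x y theta <= 1.
Proof. intros; unfold F. apply Rmult_le_reg_r with (1+x+y); [lra|].
  field_simplify; nra. Qed.

Lemma F_mono x y x' y' : 0 <= x -> 0 <= y' -> x <= x' -> y' <= y ->
  F x y theta <= F x' y' theta.
Proof. intros; unfold F.
  assert (HH: (1 + x + theta * y) * (1 + x' + y') <= (1 + x' + theta * y') * (1 + x + y)).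
  { assert (0 <= (1-theta)*((1+x')*y - (1+x)*y')).
    { apply Rmult_le_pos; [lra|]. assert ((1+x)*y' <= (1+x')*y) by (apply Rmult_le_compat; lra). lra. }
    nra. }
  apply Rmult_le_reg_r with ((1+x+y)*(1+x'+y')); [nra|].
  replace ((1 + x + theta * y) / (1 + x + y) * ((1 + x + y) * (1 + x' + y')))
    with ((1 + x + theta * y) * (1 + x' + y')) by (field; lra).
  replace ((1 + x' + theta * y') / (1 + x' + y') * ((1 + x + y) * (1 + x' + y')))
    with ((1 + x' + theta * y') * (1 + x + y)) by (field; lra). lra. Qed.

Lemma G_mono x y x' y' : 0 <= x -> 0 <= y' -> x <= x' -> y' <= y ->
  lam * F x y theta ^ k <= lam * F x' y' theta ^ k.
Proof. intros. apply Rmult_le_compat_l; [lra|]. apply pow_incr. split.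
  - left; apply F_pos; lra.
  - apply F_mono; auto. Qed.

Lemma G_pos x y : 0 <= x -> 0 <= y -> 0 < lam * F x y theta ^ k.
Proof. intros. apply Rmult_lt_0_compat; auto. apply pow_lt, F_pos; auto. Qed.

Lemma G_le x y : 0 <= x -> 0 <= y -> lam * F x y theta ^ k <= lam.
Proof. intros. rewrite <- (Rmult_1_r lam) at 2. apply Rmult_le_compat_l; [lra|].
  rewrite <- (pow1 k). apply pow_incr. split; [left; apply F_pos|apply F_le1]; auto. Qed.

Fixpoint bnd (m : nat) : R * R * R * R :=
  match m with
  | O => (0, lam, 0, lam)
  | S m => let '(l1, u1, l2, u2) := bnd m in
     (lam * F l1 u2 theta ^ k, lam * F u1 l2 theta ^ k,
      lam * F l2 u1 theta ^ k, lam * F u2 l1 theta ^ k)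
  end.

Definition L1 m := fst (fst (fst (bnd m))).
Definition U1 m := snd (fst (fst (bnd m))).
Definition L2 m := snd (fst (bnd m)).
Definition U2 m := snd (bnd m).

Lemma bnd_S m :
  L1 (S m) = lam * F (L1 m) (U2 m) theta ^ k /\
  U1 (S m) = lam * F (U1 m) (L2 m) theta ^ k /\
  L2 (S m) = lam * F (L2 m) (U1 m) theta ^ k /\
  U2 (S m) = lam * F (U2 m) (L1 m) theta ^ k.
Proof. unfold L1, U1, L2, U2; simpl. destruct (bnd m) as [[[a b] c] d]; simpl; auto. Qed.

Lemma bnd_nn m : 0 <= L1 m /\ 0 <= U1 m /\ 0 <= L2 m /\ 0 <= U2 m.
Proof. induction m.
  - unfold L1, U1, L2, U2; simpl; lra.
  - destruct (bnd_S m) as (e1 & e2 & e3 & e4). rewrite e1, e2, e3, e4.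
    destruct IHm as (h1 & h2 & h3 & h4).
    repeat split; left; apply G_pos; auto. Qed.

Lemma bnd_le m : L1 m <= lam /\ L2 m <= lam.
Proof. destruct m.
  - unfold L1, L2; simpl; lra.
  - destruct (bnd_S m) as (e1 & e2 & e3 & e4). rewrite e1, e3.
    destruct (bnd_nn m) as (h1 & h2 & h3 & h4). split; apply G_le; auto. Qed.

Lemma bnd_mono m : L1 m <= L1 (S m) /\ U1 (S m) <= U1 m /\
   L2 m <= L2 (S m) /\ U2 (S m) <= U2 m.
Proof. induction m.
  - destruct (bnd_S 0) as (e1 & e2 & e3 & e4). rewrite e1, e2, e3, e4.
    destruct (bnd_nn 0) as (h1 & h2 & h3 & h4).
    unfold L1, U1, L2, U2; simpl.
    repeat split; try (left; apply G_pos; lra); apply G_le; lra.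
  - destruct (bnd_S m) as (e1 & e2 & e3 & e4).
    destruct (bnd_S (S m)) as (f1 & f2 & f3 & f4).
    rewrite f1, f2, f3, f4.
    destruct (bnd_nn m) as (h1 & h2 & h3 & h4).
    destruct (bnd_nn (S m)) as (g1 & g2 & g3 & g4).
    destruct IHm as (i1 & i2 & i3 & i4).
    repeat split.
    + eapply Rle_trans; [right; apply e1|apply G_mono; auto].
    + eapply Rle_trans; [|right; symmetry; apply e2]; apply G_mono; auto.
    + eapply Rle_trans; [right; apply e3|apply G_mono; auto].
    + eapply Rle_trans; [|right; symmetry; apply e4]; apply G_mono; auto. Qed.

Lemma lim_pow (u : nat -> R) (l : R) n : is_lim_seq u l -> is_lim_seq (fun m => u m ^ n) (l ^ n).
Proof. intros H; induction n; simpl.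
  - apply is_lim_seq_const.
  - apply (is_lim_seq_mult' u (fun m => u m ^ n)); auto. Qed.

Lemma lim_G (u v : nat -> R) (a b : R) : 0 <= a -> 0 <= b -> is_lim_seq u a -> is_lim_seq v b ->
  is_lim_seq (fun m => lam * F (u m) (v m) theta ^ k) (lam * F a b theta ^ k).
Proof. intros. unfold F.
  apply (is_lim_seq_scal_l _ lam (Finite _)).
  apply lim_pow. apply is_lim_seq_div'; [| |lra].
  - apply is_lim_seq_plus'; [apply is_lim_seq_plus'; [apply is_lim_seq_const|auto]|].
    apply (is_lim_seq_scal_l _ theta (Finite b)); auto.
  - apply is_lim_seq_plus'; auto. apply is_lim_seq_plus'; auto. apply is_lim_seq_const. Qed.

Lemma prod_map_mono (l : list nat) (f g : nat -> R) :
  (forall j, In j l -> 0 <= f j <= g j) ->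
  0 <= fold_right Rmult 1 (map f l) <= fold_right Rmult 1 (map g l).
Proof. induction l; simpl; intros H.
  - lra.
  - destruct IHl as [h1 h2]. { intros; apply H; auto. }
    destruct (H a (or_introl eq_refl)). split.
    + apply Rmult_le_pos; auto.
    + apply Rmult_le_compat; auto. Qed.

Lemma prod_const (l : list nat) c : fold_right Rmult 1 (map (fun _ => c) l) = c ^ length l.
Proof. induction l; simpl; auto. rewrite IHl; auto. Qed.

Lemma prod_lo c f : (forall j, In j (seq 0 k) -> 0 <= c <= f j) ->
  lam * c ^ k <= lam * fold_right Rmult 1 (map f (seq 0 k)).
Proof. intros H. apply Rmult_le_compat_l; [lra|].
  rewrite <- (length_seq k 0) at 1. rewrite <- prod_const. apply prod_map_mono; auto. Qed.

Lemma prod_hi c f : (forall j, In j (seq 0 k) -> 0 <= f j <= c) ->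
  lam * fold_right Rmult 1 (map f (seq 0 k)) <= lam * c ^ k.
Proof. intros H. apply Rmult_le_compat_l; [lra|].
  rewrite <- (length_seq k 0) at 2. rewrite <- prod_const. apply prod_map_mono; auto. Qed.

Lemma prod_succ_const c : prod_succ k (fun _ => c) = c ^ k.
Proof. unfold prod_succ. rewrite prod_const, length_seq; auto. Qed.

Lemma succ_vertex i j : is_vertex k i -> In j (seq 0 k) -> is_vertex k (i ++ [j]).
Proof. intros H Hj. apply in_seq in Hj. unfold is_vertex.
  apply Forall_app; split; auto. constructor; [lia|constructor]. Qed.

Lemma tree_bnd z1 z2 : tree_pos_sol k lam theta z1 z2 ->
  forall m i, is_vertex k i -> L1 m <= z1 i <= U1 m /\ L2 m <= z2 i <= U2 m.
Proof. intros T m. induction m; intros i Hi.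
  - destruct (T i Hi) as (p1 & p2 & e1 & e2).
    unfold L1, U1, L2, U2; simpl.
    assert (forall j, In j (seq 0 k) -> 0 <= F (z1 (i ++ [j])) (z2 (i ++ [j])) theta <= 1
         /\ 0 <= F (z2 (i ++ [j])) (z1 (i ++ [j])) theta <= 1) as HF.
    { intros j Hj. destruct (T _ (succ_vertex i j Hi Hj)) as (q1 & q2 & _).
      repeat split; try (left; apply F_pos; lra); apply F_le1; lra. }
    destruct (prod_map_mono (seq 0 k) (fun j => F (z1 (i ++ [j])) (z2 (i ++ [j])) theta) (fun _ => 1))
      as [a1 a2]. { intros j Hj; apply HF; auto. }
    destruct (prod_map_mono (seq 0 k) (fun j => F (z2 (i ++ [j])) (z1 (i ++ [j])) theta) (fun _ => 1))
      as [b1 b2]. { intros j Hj; apply HF; auto. }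
    rewrite prod_const in a2, b2. rewrite pow1 in a2, b2. unfold prod_succ in e1, e2.
    split; split; try lra.
    + rewrite e1. rewrite <- (Rmult_1_r lam) at 2. apply Rmult_le_compat_l; lra.
    + rewrite e2. rewrite <- (Rmult_1_r lam) at 2. apply Rmult_le_compat_l; lra.
  - destruct (T i Hi) as (p1 & p2 & e1 & e2).
    destruct (bnd_S m) as (f1 & f2 & f3 & f4). rewrite f1, f2, f3, f4.
    destruct (bnd_nn m) as (h1 & h2 & h3 & h4).
    assert (forall j, In j (seq 0 k) ->
      (0 <= F (L1 m) (U2 m) theta <= F (z1 (i ++ [j])) (z2 (i ++ [j])) theta /\
       0 <= F (z1 (i ++ [j])) (z2 (i ++ [j])) theta <= F (U1 m) (L2 m) theta) /\
      (0 <= F (L2 m) (U1 m) theta <= F (z2 (i ++ [j])) (z1 (i ++ [j])) theta /\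
       0 <= F (z2 (i ++ [j])) (z1 (i ++ [j])) theta <= F (U2 m) (L1 m) theta)) as HF.
    { intros j Hj. pose proof (succ_vertex i j Hi Hj) as V.
      destruct (T _ V) as (q1 & q2 & _). destruct (IHm _ V) as [[r1 r2] [r3 r4]].
      repeat split; try (left; apply F_pos; lra); apply F_mono; lra. }
    unfold prod_succ in e1, e2. rewrite e1, e2.
    repeat split; [apply prod_lo|apply prod_hi|apply prod_lo|apply prod_hi];
      intros j Hj; apply HF; auto.
Qed.

End Aux.

Theorem mainTheorem14 (k : nat) (lam theta : R)
  (hk : (1 <= k)%nat) (hlam : 0 < lam) (htheta0 : 0 < theta) (htheta1 : theta < 1)
  (huniq4 : exists a b c d, sys4_pos_sol k lam theta a b c d /\
     forall a' b' c' d', sys4_pos_sol k lam theta a' b' c' d' ->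
       a' = a /\ b' = b /\ c' = c /\ d' = d) :
  exists x y : R,
    sys2_pos_sol k lam theta x y /\
    (forall x' y', sys2_pos_sol k lam theta x' y' -> x' = x /\ y' = y) /\
    tree_pos_sol k lam theta (fun _ => x) (fun _ => y) /\
    (forall z1 z2 : list nat -> R, tree_pos_sol k lam theta z1 z2 ->
       forall i, is_vertex k i -> z1 i = x /\ z2 i = y).
Proof.
  destruct huniq4 as (a & b & c & d & Hs & Hu).
  pose proof (bnd_mono k lam theta hlam htheta0 htheta1) as Mo.
  pose proof (bnd_nn k lam theta hlam htheta0 htheta1) as Nn.
  pose proof (bnd_le k lam theta hlam htheta0 htheta1) as Le.
  pose proof (bnd_S k lam theta) as BS.
  set (L1 := L1 k lam theta) in *. set (U1 := U1 k lam theta) in *.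
  set (L2 := L2 k lam theta) in *. set (U2 := U2 k lam theta) in *.
  assert (X1 : ex_finite_lim_seq L1) by (apply (ex_finite_lim_seq_incr L1 lam); intro nn0; destruct (Mo nn0); destruct (Le nn0); destruct (Nn nn0); tauto).
  assert (X2 : ex_finite_lim_seq L2) by (apply (ex_finite_lim_seq_incr L2 lam); intro nn0; destruct (Mo nn0); destruct (Le nn0); destruct (Nn nn0); tauto).
  assert (X3 : ex_finite_lim_seq U1) by (apply (ex_finite_lim_seq_decr U1 0); intro nn0; destruct (Mo nn0); destruct (Le nn0); destruct (Nn nn0); tauto).
  assert (X4 : ex_finite_lim_seq U2) by (apply (ex_finite_lim_seq_decr U2 0); intro nn0; destruct (Mo nn0); destruct (Le nn0); destruct (Nn nn0); tauto).
  destruct X1 as [l1 H1]. destruct X2 as [l2 H2]. destruct X3 as [u1 H3]. destruct X4 as [u2 H4].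
  assert (nn : forall (u : nat -> R) (l : R), (forall n, 0 <= u n) -> is_lim_seq u l -> 0 <= l).
  { intros u l Hn Hl. pose proof (is_lim_seq_le (fun _ => 0) u 0 l Hn (is_lim_seq_const 0) Hl) as X.
    simpl in X. exact X. }
  assert (n1 : 0 <= l1) by (apply (nn L1); auto; intro; apply Nn).
  assert (n2 : 0 <= l2) by (apply (nn L2); auto; intro; apply Nn).
  assert (n3 : 0 <= u1) by (apply (nn U1); auto; intro; apply Nn).
  assert (n4 : 0 <= u2) by (apply (nn U2); auto; intro; apply Nn).
  assert (fx : forall (u v w : nat -> R) (a0 b0 c0 : R),
    (forall m, w (S m) = lam * F (u m) (v m) theta ^ k) -> 0 <= a0 -> 0 <= b0 ->
    is_lim_seq u a0 -> is_lim_seq v b0 -> is_lim_seq w c0 -> c0 = lam * F a0 b0 theta ^ k).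
  { intros u v w a0 b0 c0 E ha hb hu hv hw.
    apply is_lim_seq_incr_1 in hw.
    assert (is_lim_seq (fun m => w (S m)) (lam * F a0 b0 theta ^ k)).
    { apply (is_lim_seq_ext (fun m => lam * F (u m) (v m) theta ^ k)).
      - intro m; rewrite E; auto.
      - apply lim_G; auto. }
    pose proof (is_lim_seq_unique _ _ hw) as X. rewrite (is_lim_seq_unique _ _ H) in X.
    injection X; auto. }
  assert (e1 : l1 = lam * F l1 u2 theta ^ k) by (apply (fx L1 U2 L1); auto; intro; apply BS).
  assert (e2 : u1 = lam * F u1 l2 theta ^ k) by (apply (fx U1 L2 U1); auto; intro; apply BS).
  assert (e3 : l2 = lam * F l2 u1 theta ^ k) by (apply (fx L2 U1 L2); auto; intro; apply BS).
  assert (e4 : u2 = lam * F u2 l1 theta ^ k) by (apply (fx U2 L1 U2); auto; intro; apply BS).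
  assert (p1 : 0 < l1) by (rewrite e1; apply G_pos; auto).
  assert (p2 : 0 < u1) by (rewrite e2; apply G_pos; auto).
  assert (p3 : 0 < l2) by (rewrite e3; apply G_pos; auto).
  assert (p4 : 0 < u2) by (rewrite e4; apply G_pos; auto).
  destruct (Hu l1 u1 l2 u2) as (q1 & q2 & q3 & q4). { repeat split; auto. }
  destruct (Hu u1 l1 u2 l2) as (r1 & r2 & r3 & r4). { repeat split; auto. }
  assert (E1 : u1 = l1) by congruence. assert (E2 : u2 = l2) by congruence.
  exists l1, l2. split; [|split; [|split]].
  - rewrite E2 in e1; rewrite E1 in e3; repeat split; auto.
  - intros x' y' (s1 & s2 & s3 & s4).
    destruct (Hu x' x' y' y') as (t1 & t2 & t3 & t4). { repeat split; auto. }
    split; congruence.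
  - intros i Hi. rewrite !prod_succ_const. rewrite E2 in e1; rewrite E1 in e3; repeat split; auto.
  - intros z1 z2 T i Hi.
    pose proof (tree_bnd k lam theta hlam htheta0 htheta1 z1 z2 T) as B.
    assert (sq : forall (lo hi : nat -> R) (l z : R), (forall m, lo m <= z <= hi m) ->
       is_lim_seq lo l -> is_lim_seq hi l -> z = l).
    { intros lo hi l z Hb Hlo Hhi.
      pose proof (is_lim_seq_le lo (fun _ => z) l z (fun m => proj1 (Hb m)) Hlo (is_lim_seq_const z)).
      pose proof (is_lim_seq_le (fun _ => z) hi z l (fun m => proj2 (Hb m)) (is_lim_seq_const z) Hhi).
      simpl in *; lra. }
    split.
    + apply (sq L1 U1); auto. intro m; apply (B m i Hi). rewrite <- E1; auto.
    + apply (sq L2 U2); auto. intro m; apply (B m i Hi). rewrite <- E2; auto.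
Qed.
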